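(* Assume (a1)–(a3) with constants $L,\beta$, let $l\in\mathbb{R}$ be such that $F+\frac l2\|\cdot\|^2$ is convex, and let $\gamma>0$ satisfy $\Lambda(\gamma)>0$. Suppose $F$, $G$ and $H$ are each bounded below and at least one of them is coercive (i.e. $\liminf_{\|x\|\to\infty}f(x)=\infty$). Then every sequence $\{(x^t,y^t,z^t)\}$ generated by the DYS iteration is bounded.
   Context: Assumptions: (a1) $F:\mathbb{R}^n\to\mathbb{R}$ is differentiable with $L$-Lipschitz gradient; (a2) $G:\mathbb{R}^n\to(-\infty,\infty]$ is proper, lower semicontinuous, and $\arg\min_y\{G(y)+\frac1{2\gamma}\|y-x\|^2\}\neq\emptyset$ for all $x$ and $\gamma>0$; (a3) $H:\mathbb{R}^n\to\mathbb{R}$ is differentiable with $\beta$-Lipschitz gradient. DYS iteration: fix $\gamma>0$, $x^0$; for $t\ge0$, $y^{t+1}\in\arg\min_y\{F(y)+\frac{1}{2\gamma}\|y-x^t\|^2\}$, $z^{t+1}\in\arg\min_z\{G(z)+\frac{1}{2\gamma}\|z-(2y^{t+1}-\gamma\nabla H(y^{t+1})-x^t)\|^2\}$, $x^{t+1}=x^t+(z^{t+1}-y^{t+1})$. $\Lambda(\gamma)=\tfrac12(\tfrac1\gamma-l)-\beta-(\tfrac1\gamma+\tfrac\beta2)[(-1+2\gamma l)+(1+\gamma L)^2]$. *)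

(* Defs.v *)
From HB Require Import structures.
From mathcomp Require Import all_boot all_order all_algebra.
From mathcomp Require Import all_classical all_reals all_analysis.
Set Implicit Arguments. Unset Strict Implicit. Unset Printing Implicit Defensive.
Import Order.TTheory GRing.Theory Num.Theory.
Import numFieldNormedType.Exports.
Local Open Scope ring_scope.

Section Defs.
Variables (R : realType) (n : nat).
Local Notation V := 'rV[R]_n.

Definition dotv (u v : V) : R := \sum_(i < n) u ord0 i * v ord0 i.
Definition enorm (u : V) : R := Num.sqrt (dotv u u).

Definition has_gradient (f : V -> R) (g : V -> V) : Prop :=
  forall x, differentiable f x /\ forall v, 'd f x v = dotv (g x) v.

Definition lipschitz_with (L : R) (g : V -> V) : Prop :=
  forall x y, enorm (g x - g y) <= L * enorm (x - y).

Definition convex_fun (f : V -> R) : Prop :=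
  forall (x y : V) (t : R), 0 <= t <= 1 ->
    f (t *: x + (1 - t) *: y) <= t * f x + (1 - t) * f y.

Definition bounded_below (f : V -> R) : Prop := exists c, forall x, c <= f x.
Definition ebounded_below (f : V -> \bar R) : Prop :=
  exists c : R, forall x, (c%:E <= f x)%E.

Definition coercive (f : V -> R) : Prop :=
  forall M : R, exists r : R, forall x, r < enorm x -> M < f x.
Definition ecoercive (f : V -> \bar R) : Prop :=
  forall M : R, exists r : R, forall x, r < enorm x -> (M%:E < f x)%E.

Definition proper_efun (f : V -> \bar R) : Prop :=
  (forall x, f x != -oo%E) /\ exists x, f x != +oo%E.

Definition is_argmin (phi : V -> R) (y : V) : Prop := forall y', phi y <= phi y'.
Definition is_eargmin (phi : V -> \bar R) (y : V) : Prop :=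
  forall y', (phi y <= phi y')%E.

Definition bounded_seq (u : nat -> V) : Prop := exists M : R, forall t, enorm (u t) <= M.

End Defs.

Definition Lambda (R : realType) (l L beta gamma : R) : R :=
  2^-1 * (gamma^-1 - l) - beta
  - (gamma^-1 + beta / 2) * ((-1 + 2 * gamma * l) + (1 + gamma * L) ^+ 2).

(* Main.v *)
Require Import Defs.
From HB Require Import structures.
From mathcomp Require Import all_boot all_order all_algebra.
From mathcomp Require Import all_classical all_reals all_analysis.
From mathcomp Require Import ring lra.
Import Order.TTheory GRing.Theory Num.Theory.
Import numFieldNormedType.Exports.
Local Open Scope ring_scope.

Section FileA.
Set Implicit Arguments. Unset Strict Implicit. Unset Printing Implicit Defensive.

Section Dot.
Variables (R : realType) (n : nat).
Local Notation V := 'rV[R]_n.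
Implicit Types u v w : V.

Lemma dotvC u v : dotv u v = dotv v u.
Proof. by apply: eq_bigr => i _; rewrite mulrC. Qed.
Lemma dotvDl u v w : dotv (u + v) w = dotv u w + dotv v w.
Proof. by rewrite /dotv -big_split; apply: eq_bigr => i _; rewrite !mxE mulrDl. Qed.
Lemma dotvDr u v w : dotv w (u + v) = dotv w u + dotv w v.
Proof. by rewrite dotvC dotvDl !(dotvC w). Qed.
Lemma dotvZl a u v : dotv (a *: u) v = a * dotv u v.
Proof. by rewrite /dotv mulr_sumr; apply: eq_bigr => i _; rewrite !mxE mulrA. Qed.
Lemma dotvZr a u v : dotv u (a *: v) = a * dotv u v.
Proof. by rewrite dotvC dotvZl dotvC. Qed.
Lemma dotvNl u v : dotv (- u) v = - dotv u v.
Proof. by rewrite -scaleN1r dotvZl mulN1r. Qed.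
Lemma dotvNr u v : dotv u (- v) = - dotv u v.
Proof. by rewrite dotvC dotvNl dotvC. Qed.
Lemma dotvBl u v w : dotv (u - v) w = dotv u w - dotv v w.
Proof. by rewrite dotvDl dotvNl. Qed.
Lemma dotvBr u v w : dotv w (u - v) = dotv w u - dotv w v.
Proof. by rewrite dotvDr dotvNr. Qed.
Lemma dotv0l v : dotv 0 v = 0.
Proof. by rewrite /dotv big1 // => i _; rewrite mxE mul0r. Qed.
Lemma dotvv_ge0 u : 0 <= dotv u u.
Proof. by apply: sumr_ge0 => i _; rewrite -expr2 sqr_ge0. Qed.
Lemma dotvv_eq0 u : dotv u u = 0 -> u = 0.
Proof.
move=> h; apply/rowP => i; rewrite mxE.
have H : \sum_(j < n) u ord0 j ^+ 2 = 0.
  by rewrite -[RHS]h /dotv; apply: eq_bigr => j _; rewrite expr2.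
have := (psumr_eq0P (fun j (_ : true) => sqr_ge0 (u ord0 j)) H).
by move=> /(_ i isT) /eqP; rewrite sqrf_eq0 => /eqP.
Qed.
Lemma enorm_ge0 u : 0 <= enorm u.
Proof. exact: sqrtr_ge0. Qed.
Lemma enorm_sq u : enorm u ^+ 2 = dotv u u.
Proof. by rewrite /enorm sqr_sqrtr // dotvv_ge0. Qed.

Lemma CS u v : dotv u v <= enorm u * enorm v.
Proof.
have [->|u0] := eqVneq u 0.
  by rewrite dotv0l /enorm dotv0l sqrtr0 mul0r.
have [->|v0] := eqVneq v 0.
  by rewrite dotvC dotv0l /enorm dotv0l sqrtr0 mulr0.
have nu : 0 < enorm u.
  rewrite lt_def enorm_ge0 andbT; apply/eqP => h.
  have h2 : dotv u u = 0 by rewrite -enorm_sq h expr2 mulr0.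
  by move: u0; rewrite (dotvv_eq0 h2) eqxx.
have nv : 0 < enorm v.
  rewrite lt_def enorm_ge0 andbT; apply/eqP => h.
  have h2 : dotv v v = 0 by rewrite -enorm_sq h expr2 mulr0.
  by move: v0; rewrite (dotvv_eq0 h2) eqxx.
pose a := enorm v; pose b := enorm u.
have := dotvv_ge0 (a *: u - b *: v).
rewrite !(dotvBl, dotvBr, dotvZl, dotvZr) -!enorm_sq (dotvC v u) -/a -/b.
move=> h.
have : 2 * (a * b) * dotv u v <= 2 * (a * b) * (b * a).
  nra.
rewrite ler_pM2l; first by rewrite mulrC.
by rewrite mulr_gt0 // mulr_gt0.
Qed.

End Dot.

End FileA.

Section FileB.
Set Implicit Arguments. Unset Strict Implicit. Unset Printing Implicit Defensive.
Local Open Scope classical_set_scope.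
Local Open Scope ring_scope.

Section Calc.
Variables (R : realType) (n : nat).
Local Notation V := 'rV[R]_n.

Lemma quot_cvg (f : V -> R) g a d : has_gradient f g ->
  (fun h : R => h^-1 * (f (h *: d + a) - f a)) @ 0^' --> dotv (g a) d.
Proof.
move=> hf; have [df dv] := hf a.
have := @diff_derivable _ _ _ f a d df.
rewrite /derivable => hc.
rewrite -dv -deriveE //.
Qed.
End Calc.

Section Calc2.
Variables (R : realType) (n : nat).
Local Notation V := 'rV[R]_n.

Lemma right_of_dnbhs (f : R -> R) (l : R) : f @ (0:R)^' --> l -> f @ (0:R)^'+ --> l.
Proof.
move=> cf A /cf /(@nbhs_ballP _ R^o) [_ /posnumP[e] xe_A].
by exists e%:num => //= y xe_y; rewrite lt_def => /andP [xney _]; apply: xe_A.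
Qed.

Lemma quot_le (f : V -> R) g a d (A B : R) : has_gradient f g ->
  (forall s : R, 0 < s -> s <= 1 -> f (s *: d + a) - f a <= s * A + s ^+ 2 * B) ->
  dotv (g a) d <= A.
Proof.
move=> hf hb.
have c1 := right_of_dnbhs (@quot_cvg _ _ f g a d hf).
have c2 : (fun s : R => A + s * B) @ 0^'+ --> A.
  apply: cvg_at_right_filter.
  rewrite -[X in _ --> X]addr0 -[X in _ --> A + X](mul0r B).
  apply: cvgD; first exact: cvg_cst.
  apply: cvgMl; exact: cvg_id.
apply: (ler_cvg_to c1 c2).
near=> s.
have s0 : 0 < s by near: s; exact: nbhs_right_gt.
have s1 : s <= 1 by near: s; exact: nbhs_right_le.
have := hb s s0 s1.
move=> h; rewrite ler_pdivrMl //; apply: (le_trans h).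
by rewrite mulrDr expr2 mulrA.
Unshelve. all: by end_near.
Qed.

Lemma quot_ge (f : V -> R) g a d (A B : R) : has_gradient f g ->
  (forall s : R, 0 < s -> s <= 1 -> s * A - s ^+ 2 * B <= f (s *: d + a) - f a) ->
  A <= dotv (g a) d.
Proof.
move=> hf hb.
have c1 := right_of_dnbhs (@quot_cvg _ _ f g a d hf).
have c2 : (fun s : R => A - s * B) @ 0^'+ --> A.
  apply: cvg_at_right_filter.
  rewrite -[X in _ --> X]subr0 -[X in _ --> A - X](mul0r B).
  apply: cvgB; first exact: cvg_cst.
  apply: cvgMl; exact: cvg_id.
apply: (ler_cvg_to c2 c1).
near=> s.
have s0 : 0 < s by near: s; exact: nbhs_right_gt.
have s1 : s <= 1 by near: s; exact: nbhs_right_le.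
have := hb s s0 s1.
move=> h; rewrite ler_pdivlMl //; apply: (le_trans _ h).
by rewrite mulrBr expr2 mulrA.
Unshelve. all: by end_near.
Qed.
End Calc2.

End FileB.

Section FileC.
Set Implicit Arguments. Unset Strict Implicit. Unset Printing Implicit Defensive.
Local Open Scope classical_set_scope.
Local Open Scope ring_scope.

Section Facts.
Variables (R : realType) (n : nat).
Local Notation V := 'rV[R]_n.

Ltac dexp := rewrite ?(dotvDl, dotvDr, dotvBl, dotvBr, dotvZl, dotvZr, dotvNl, dotvNr).

Lemma weak_conv (F : V -> R) gF l : has_gradient F gF ->
  convex_fun (fun x => F x + l / 2 * enorm x ^+ 2) ->
  forall v d, dotv (gF v) d <= F (v + d) - F v + l / 2 * enorm d ^+ 2.
Proof.
move=> hF hc v d.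
apply: (@quot_le _ _ F gF v d _ (- (l / 2 * enorm d ^+ 2)) hF) => s s0 s1.
have := hc (v + d) v s; rewrite (ltW s0) s1 /= => /(_ isT).
have -> : s *: (v + d) + (1 - s) *: v = s *: d + v.
  by rewrite scalerDr scalerBl scale1r addrC addrA subrK addrC.
rewrite !enorm_sq; dexp.
rewrite (dotvC d v).
move=> h. nra.
Qed.


Lemma sqexp (u w : V) (s : R) :
  dotv (s *: u + w) (s *: u + w) = s ^+ 2 * dotv u u + 2 * s * dotv u w + dotv w w.
Proof. dexp; rewrite (dotvC w u); ring. Qed.

Lemma foc (F : V -> R) gF (g : R) x y : has_gradient F gF -> 0 < g ->
  is_argmin (fun v => F v + (2 * g)^-1 * enorm (v - x) ^+ 2) y ->
  gF y = g^-1 *: (x - y).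
Proof.
move=> hF g0 hmin.
pose e := gF y - g^-1 *: (x - y).
have H : g^-1 * dotv (x - y) (- e) <= dotv (gF y) (- e).
  apply: (@quot_ge _ _ F gF y (- e) _ ((2 * g)^-1 * enorm (- e) ^+ 2) hF) => s s0 s1.
  have := hmin (s *: - e + y).
  rewrite !enorm_sq.
  have -> : s *: - e + y - x = s *: - e + (y - x) by rewrite addrA.
  rewrite sqexp.
  have -> : dotv (x - y) (- e) = - dotv (- e) (y - x).
    by rewrite -(opprB y x) !(dotvNl, dotvNr) !opprK dotvC.
  move: (dotv (- e) (- e)) (dotv (- e) (y - x)) (dotv (y - x) (y - x)) => a b c.
  have gi : 0 < (2 * g)^-1 by rewrite invr_gt0 mulr_gt0.
  have -> : g^-1 = 2 * (2 * g)^-1 by rewrite invfM mulrA mulrV ?unitfE // mul1r.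
  move=> h; nra.
have : dotv e (- e) >= 0.
  rewrite /e dotvBl dotvZl; lra.
rewrite dotvNr oppr_ge0 => h2.
have : dotv e e = 0 by apply/eqP; rewrite eq_le h2 dotvv_ge0.
move/dotvv_eq0 => /eqP; rewrite subr_eq0 => /eqP.
done.
Qed.

Lemma enormZ a (u : V) : enorm (a *: u) = `|a| * enorm u.
Proof.
by rewrite /enorm dotvZl dotvZr mulrA -expr2 sqrtrM ?sqr_ge0 // sqrtr_sqr.
Qed.

Lemma is_derive_line (f : V -> R) g v d (s : R) : has_gradient f g ->
  is_derive s 1 (fun s : R => f (s *: d + v)) (dotv (g (s *: d + v)) d).
Proof.
move=> hf.
have c := @quot_cvg _ _ f g (s *: d + v) d hf.
have E : (fun h : R => h^-1 *: (((fun s : R => f (s *: d + v)) \o shift s) (h *: 1) - f (s *: d + v)))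
   = (fun h : R => h^-1 * (f (h *: d + (s *: d + v)) - f (s *: d + v))).
  apply/funext => h /=.
  have -> : h%:A = h :> R by rewrite /GRing.scale /= mulr1.
  by rewrite scalerDl addrA.
apply: DeriveDef.
  by rewrite /derivable E; apply/cvg_ex; eexists; exact: c.
by rewrite /derive E; exact: cvg_lim c.
Qed.


Lemma descent (f : V -> R) g K v d : has_gradient f g -> lipschitz_with K g ->
  f (v + d) <= f v + dotv (g v) d + K / 2 * enorm d ^+ 2.
Proof.
move=> hf hl.
set c1 := dotv (g v) d; set c2 := K / 2 * enorm d ^+ 2.
pose p0 := fun s : R => f (s *: d + v).
pose p : R -> R := p0 - (cst c1 * id + cst c2 * (id ^+ 2)).
have dp (s : R) : is_derive s (1:R) p (dotv (g (s *: d + v)) d - (c1 + 2 * s * c2)).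
  apply: is_derive_eq.
    apply: is_deriveB; first exact: is_derive_line.
  have alg (k : R) : k%:A = k by rewrite /GRing.scale /= mulr1.
  have sc (a b : R) : a *: b = a * b by [].
  by rewrite /cst /= !scaler0 !addr0 !alg sc expr1 mulrC mulrA.
have hcont : {within `[0, 1], continuous p}.
  apply: continuous_subspaceT => x.
  apply: differentiable_continuous; apply/derivable1_diffP.
  exact: (@ex_derive _ _ _ _ _ _ _ (dp x)).
have hsign : forall x : R, x \in `]0, 1[ -> (p^`())%classic x <= 0.
  move=> x /[!in_itv] /= /andP [x0 x1].
  rewrite derive1E (@derive_val _ _ _ _ _ _ _ (dp x)).
  have h1 := CS (g (x *: d + v) - g v) d.
  have h2 := hl (x *: d + v) v.
  rewrite addrK enormZ (ger0_norm (ltW x0)) in h2.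
  have h3 := enorm_ge0 d.
  have e1 : dotv (g (x *: d + v)) d - c1 = dotv (g (x *: d + v) - g v) d by rewrite dotvBl.
  rewrite /c2; nra.
have hmono := @ler0_derive1_le_cc R p 0 1
  (fun x _ => @ex_derive _ _ _ _ _ _ _ (dp x)) hsign hcont.
have := hmono 1 0; rewrite !in_itv /= !lexx ler01 => /(_ isT isT isT).
rewrite /p /p0 /cst !fctE /= scale1r scale0r add0r expr1n expr0n /= !mulr1 !mulr0 addrC => h.
by rewrite addrC; lra.
Qed.

End Facts.

End FileC.

Section FileD.
Set Implicit Arguments. Unset Strict Implicit. Unset Printing Implicit Defensive.

Lemma num_core (R : realType) (a b c : R) : 0 <= b -> 0 <= c -> - b <= a ->
  0 < 2^-1 * (1 - a) - c - (1 + c / 2) * ((-1 + 2 * a) + (1 + b) ^+ 2) ->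
  (a + c) / 2 - 2^-1 + b ^+ 2 + c * b <= 0 /\ b + c < 1.
Proof.
move=> b0 c0 ab h.
have hS : 0 <= c / 2 * (1 - b) ^+ 2 + 2 * (a + b) * (1 + c / 2).
  apply: addr_ge0; first by apply: mulr_ge0; [lra | exact: sqr_ge0].
  apply: mulr_ge0; lra.
have e1 : (a + c) / 2 - 2^-1 + b ^+ 2 + c * b =
   - (2^-1 * (1 - a) - c - (1 + c / 2) * ((-1 + 2 * a) + (1 + b) ^+ 2))
   - (c / 2 * (1 - b) ^+ 2 + 2 * (a + b) * (1 + c / 2)).
  by field.
split; first lra.
rewrite ltNge; apply/negP => hbc.
have : 0 < 2^-1 + b / 2 - c - (1 + c / 2) * b ^+ 2.
  apply: lt_le_trans h _. nra.
nra.
Qed.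

Lemma num_main (R : realType) (l L beta g : R) : 0 < g -> 0 <= L -> 0 <= beta -> - L <= l ->
  0 < Lambda l L beta g ->
  g * ((l + beta) / 2 - (2 * g)^-1 + g * L ^+ 2 + g * beta * L) <= 0 /\ g * (L + beta) < 1.
Proof.
move=> g0 L0 b0 lL hL.
have := @num_core R (g * l) (g * L) (g * beta).
rewrite !mulr_ge0 ?(ltW g0) // => /(_ isT isT).
have -> : (- (g * L) <= g * l) = true.
  by apply/idP; rewrite -mulrN; apply: ler_wpM2l => //; exact: ltW.
move=> /(_ isT).
have e : 2^-1 * (1 - g * l) - g * beta -
    (1 + g * beta / 2) * (-1 + 2 * (g * l) + (1 + g * L) ^+ 2) = g * Lambda l L beta g.
  rewrite /Lambda; field; exact: lt0r_neq0.
rewrite e => /(_ (mulr_gt0 g0 hL)) [h1 h2]; split; last lra.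
have -> : g * ((l + beta) / 2 - (2 * g)^-1 + g * L ^+ 2 + g * beta * L) =
  (g * l + g * beta) / 2 - 2^-1 + (g * L) ^+ 2 + g * beta * (g * L).
  field; exact: lt0r_neq0.
exact: h1.
Qed.

End FileD.

Section FileE.
Set Implicit Arguments. Unset Strict Implicit. Unset Printing Implicit Defensive.

Section Ident.
Variables (R : realType) (n : nat).
Local Notation V := 'rV[R]_n.

Ltac coord := rewrite !enorm_sq /dotv;
  repeat (rewrite mulr_sumr || rewrite -sumrN || rewrite -big_split /=);
  apply: eq_bigr => i _; rewrite !mxE.

Lemma ident1 (g : R) (x y z f h : V) : g != 0 -> x = y + g *: f ->
  (2 * g)^-1 * enorm (z - (2 *: y - g *: h - x)) ^+ 2 - g / 2 * enorm (f + h) ^+ 2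
  = dotv (f + h) (z - y) + (2 * g)^-1 * enorm (z - y) ^+ 2.
Proof.
by move=> g0 ->; coord; field.
Qed.

Lemma ident2 (g l b : R) (x y z f h xp yp fp hp : V) : g != 0 -> x = y + g *: f ->
  xp = x + (z - y) -> fp = g^-1 *: (xp - yp) ->
  (2 * g)^-1 * enorm (z - (2 *: yp - g *: hp - xp)) ^+ 2 - g / 2 * enorm (fp + hp) ^+ 2
  - (dotv (f + h) (z - y) + (2 * g)^-1 * enorm (z - y) ^+ 2)
  + (l / 2 * enorm (y - yp) ^+ 2 - dotv fp (y - yp))
  + (dotv h (yp - y) + b / 2 * enorm (yp - y) ^+ 2)
  = (l + b) / 2 * enorm (yp - y) ^+ 2 - (2 * g)^-1 * enorm (yp - y) ^+ 2
    + g * enorm (fp - f) ^+ 2 + g * dotv (hp - h) (fp - f).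
Proof.
by move=> g0 -> -> ->; coord; field.
Qed.

Lemma enormD (u v : V) : enorm (u + v) <= enorm u + enorm v.
Proof.
have h1 := CS u v.
have h2 : enorm (u + v) ^+ 2 = enorm u ^+ 2 + 2 * dotv u v + enorm v ^+ 2.
  rewrite !enorm_sq !(dotvDl, dotvDr) (dotvC v u); ring.
have := enorm_ge0 (u + v); have := enorm_ge0 u; have := enorm_ge0 v.
nra.
Qed.

Lemma enormB0 (u : V) : enorm (u - 0) = enorm u.
Proof. by rewrite subr0. Qed.
End Ident.

End FileE.


Section FileM.
Set Implicit Arguments. Unset Strict Implicit. Unset Printing Implicit Defensive.
Lemma enormN (R : realType) (n : nat) (u : 'rV[R]_n) : enorm (- u) = enorm u.
Proof. by rewrite /enorm dotvNl dotvNr opprK. Qed.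

Lemma fin_of (R : realType) (a b : \bar R) (r s : R) : a != -oo%E -> b != -oo%E -> b != +oo%E ->
  (a + r%:E <= b + s%:E)%E -> a = (fine a)%:E.
Proof.
case: a => [a'| |] //; case: b => [b'| |] //.
Qed.

End FileM.

Theorem mainTheorem3 (R : realType) (n : nat)
    (F : 'rV[R]_n -> R) (gradF : 'rV[R]_n -> 'rV[R]_n)
    (G : 'rV[R]_n -> \bar R)
    (H : 'rV[R]_n -> R) (gradH : 'rV[R]_n -> 'rV[R]_n)
    (L beta l gamma : R)
    (* (a1) *)
    (hF : has_gradient F gradF) (hFL : lipschitz_with L gradF)
    (* (a2) *)
    (hGp : proper_efun G) (hGl : lower_semicontinuous G)
    (hGprox : forall (x : 'rV[R]_n) (g : R), 0 < g ->
       exists y, is_eargmin (fun y => (G y + ((2 * g)^-1 * enorm (y - x) ^+ 2)%:E)%E) y)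
    (* (a3) *)
    (hH : has_gradient H gradH) (hHL : lipschitz_with beta gradH)
    (* weak convexity of F *)
    (hFconv : convex_fun (fun x => F x + l / 2 * enorm x ^+ 2))
    (hgamma : 0 < gamma) (hLambda : 0 < Lambda l L beta gamma)
    (hFb : bounded_below F) (hGb : ebounded_below G) (hHb : bounded_below H)
    (hcoer : coercive F \/ ecoercive G \/ coercive H)
    (* DYS iteration; x 0 arbitrary, y 0 and z 0 are unconstrained *)
    (x y z : nat -> 'rV[R]_n)
    (hy : forall t, is_argmin
            (fun v => F v + (2 * gamma)^-1 * enorm (v - x t) ^+ 2) (y t.+1))
    (hz : forall t, is_eargmin
            (fun v => (G v + ((2 * gamma)^-1 *
               enorm (v - (2 *: y t.+1 - gamma *: gradH (y t.+1) - x t)) ^+ 2)%:E)%E)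
            (z t.+1))
    (hx : forall t, x t.+1 = x t + (z t.+1 - y t.+1)) :
  bounded_seq x /\ bounded_seq y /\ bounded_seq z.
Proof.
have [[e0 he0]|nz] := pselect (exists e : 'rV[R]_n, e != 0); last first.
  have all0 : forall u : 'rV[R]_n, enorm u = 0.
    move=> u; have -> : u = 0.
      by apply/eqP; apply: contrapT => hu; apply: nz; exists u; apply/negP.
    by rewrite /enorm dotv0l sqrtr0.
  by split; [|split]; exists 0 => t; rewrite all0.
have ne : 0 < enorm e0.
  rewrite lt_def enorm_ge0 andbT; apply/eqP => h.
  have h2 : dotv e0 e0 = 0 by rewrite -enorm_sq h expr2 mulr0.
  by move: he0; rewrite (dotvv_eq0 h2) eqxx.
have L0 : 0 <= L.
  have := hFL e0 0; rewrite enormB0 => h.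
  have := enorm_ge0 (gradF e0 - gradF 0); nra.
have b0 : 0 <= beta.
  have := hHL e0 0; rewrite enormB0 => h.
  have := enorm_ge0 (gradH e0 - gradH 0); nra.
have lL : - L <= l.
  have w1 := weak_conv hF hFconv 0 e0.
  have w2 := weak_conv hF hFconv e0 (- e0).
  rewrite add0r in w1; rewrite addrN enormN in w2.
  have h1 := CS (gradF e0 - gradF 0) e0.
  have h2 := hFL e0 0; rewrite enormB0 in h2.
  rewrite dotvBl in h1; rewrite dotvNr in w2.
  have h3 := enorm_ge0 (gradF e0 - gradF 0).
  have h4 : enorm (gradF e0 - gradF 0) * enorm e0 <= L * enorm e0 * enorm e0.
    by rewrite ler_wpM2r // enorm_ge0.
  have h5 : 0 <= (L + l) * enorm e0 ^+ 2 by rewrite expr2; lra.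
  have h6 : 0 < enorm e0 ^+ 2 by rewrite exprn_gt0.
  have : 0 <= L + l by rewrite -(pmulr_lge0 _ h6).
  lra.
have [hM hK] := num_main hgamma L0 b0 lL hLambda.
have g0 : gamma != 0 by exact: lt0r_neq0.
have hfoc t : gradF (y t.+1) = gamma^-1 *: (x t - y t.+1) := foc hF hgamma (hy t).
have hxeq t : x t = y t.+1 + gamma *: gradF (y t.+1).
  by rewrite hfoc scalerA mulrV ?unitfE // scale1r addrC subrK.
have [p hp] := hGp.2.
have hgz t : G (z t.+1) = (fine (G (z t.+1)))%:E.
  have hh := hz t p; rewrite /= in hh.
  exact: (fin_of (hGp.1 _) (hGp.1 _) hp hh).
set gz := fun t => fine (G (z t.+1)).
set c := (2 * gamma)^-1.
set Phi := fun t => F (y t.+1) + H (y t.+1) + gz t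
  + c * enorm (z t.+1 - (2 *: y t.+1 - gamma *: gradH (y t.+1) - x t)) ^+ 2
  - gamma / 2 * enorm (gradF (y t.+1) + gradH (y t.+1)) ^+ 2.
have dec t : Phi t.+1 <= Phi t.
  have hm := hz t.+1 (z t.+1).
  rewrite /= hgz (hgz t) -!EFinD lee_fin in hm.
  have wa := weak_conv hF hFconv (y t.+2) (y t.+1 - y t.+2).
  rewrite (_ : y t.+2 + (y t.+1 - y t.+2) = y t.+1) in wa; last by rewrite addrC subrK.
  have db := descent (y t.+1) (y t.+2 - y t.+1) hH hHL.
  rewrite (_ : y t.+1 + (y t.+2 - y t.+1) = y t.+2) in db; last by rewrite addrC subrK.
  have id2 := ident2 l beta (gradH (y t.+1)) (gradH (y t.+2)) g0 (hxeq t) (hx t) (hfoc t.+1).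
  have id1 := ident1 (z t.+1) (gradH (y t.+1)) g0 (hxeq t).
  have lf := hFL (y t.+2) (y t.+1).
  have lh := hHL (y t.+2) (y t.+1).
  have cs := CS (gradH (y t.+2) - gradH (y t.+1)) (gradF (y t.+2) - gradF (y t.+1)).
  set r := enorm (y t.+2 - y t.+1) in lf lh id2 db.
  have r0 : 0 <= r := enorm_ge0 _.
  have nf0 := enorm_ge0 (gradF (y t.+2) - gradF (y t.+1)).
  have nh0 := enorm_ge0 (gradH (y t.+2) - gradH (y t.+1)).
  set nf := enorm (gradF (y t.+2) - gradF (y t.+1)) in lf cs id2 nf0.
  set nh := enorm (gradH (y t.+2) - gradH (y t.+1)) in lh cs nh0.
  have q1 : nf ^+ 2 <= L ^+ 2 * r ^+ 2 by nra.
  have q2 : nh * nf <= beta * L * r ^+ 2 by nra.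
  have brk : (l + beta) / 2 - c + gamma * L ^+ 2 + gamma * beta * L <= 0.
    by rewrite -(pmulr_rle0 _ hgamma).
  have q3 : (l + beta) / 2 * r ^+ 2 - c * r ^+ 2 + gamma * nf ^+ 2
      + gamma * dotv (gradH (y t.+2) - gradH (y t.+1)) (gradF (y t.+2) - gradF (y t.+1)) <= 0.
    have e1 : gamma * nf ^+ 2 <= gamma * (L ^+ 2 * r ^+ 2) by rewrite ler_wpM2l // ltW.
    have e2 : gamma * dotv (gradH (y t.+2) - gradH (y t.+1)) (gradF (y t.+2) - gradF (y t.+1))
       <= gamma * (beta * L * r ^+ 2).
      by apply: ler_wpM2l; [exact: ltW | exact: le_trans cs q2].
    have e3 : ((l + beta) / 2 - c + gamma * L ^+ 2 + gamma * beta * L) * r ^+ 2 <= 0.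
      by rewrite mulr_le0_ge0 // sqr_ge0.
    lra.
  rewrite /Phi /gz /c.
  rewrite /c in id1 id2 hm q3.
  lra.
have le0 t : Phi t <= Phi 0.
  elim: t => [|t ih]; first by [].
  exact: le_trans (dec t) ih.
set kap := c - (L + beta) / 2.
have kap0 : 0 < kap.
  have : (L + beta) < gamma^-1.
    by rewrite -(ltr_pM2l hgamma) mulrV ?unitfE.
  rewrite /kap /c invfM; lra.
have lowb t : F (z t.+1) + H (z t.+1) + gz t + kap * enorm (z t.+1 - y t.+1) ^+ 2 <= Phi t.
  have id1 := ident1 (z t.+1) (gradH (y t.+1)) g0 (hxeq t).
  have d1 := descent (y t.+1) (z t.+1 - y t.+1) hF hFL.
  have d2 := descent (y t.+1) (z t.+1 - y t.+1) hH hHL.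
  rewrite (_ : y t.+1 + (z t.+1 - y t.+1) = z t.+1) in d1 d2; last by rewrite addrC subrK.
  rewrite dotvDl in id1.
  rewrite /Phi /kap; rewrite /c in id1 *.
  lra.
have [mF hmF] := hFb.
have [mG hmG] := hGb.
have [mH hmH] := hHb.
have hmG' t : mG <= gz t.
  by have := hmG (z t.+1); rewrite hgz lee_fin.
set K0 := Phi 0 - mF - mG - mH.
have hK0 t : kap * enorm (z t.+1 - y t.+1) ^+ 2 <= K0.
  have := lowb t; have := le0 t; have := hmF (z t.+1); have := hmH (z t.+1);
  have := hmG' t; rewrite /K0; lra.
have hsq t : 0 <= kap * enorm (z t.+1 - y t.+1) ^+ 2.
  by rewrite mulr_ge0 ?sqr_ge0 // ltW.
have [Rz hRz] : exists Rz, forall t, enorm (z t.+1) <= Rz.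
  case: hcoer => [hc|[hc|hc]].
  - have [r hr] := hc (Phi 0 - mG - mH).
    exists r => t; rewrite leNgt; apply/negP => /hr.
    have := lowb t; have := le0 t; have := hmH (z t.+1);
    have := hmG' t; have := hsq t; lra.
  - have [r hr] := hc (Phi 0 - mF - mH).
    exists r => t; rewrite leNgt; apply/negP => /hr.
    rewrite hgz lte_fin.
    have := lowb t; have := le0 t; have := hmH (z t.+1);
    have := hmF (z t.+1); have := hsq t; rewrite /gz; lra.
  - have [r hr] := hc (Phi 0 - mF - mG).
    exists r => t; rewrite leNgt; apply/negP => /hr.
    have := lowb t; have := le0 t; have := hmF (z t.+1);
    have := hmG' t; have := hsq t; lra.
set Be := 1 + K0 / kap.
have hBe t : enorm (z t.+1 - y t.+1) <= Be.
  have e0' := enorm_ge0 (z t.+1 - y t.+1).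
  set e := enorm (z t.+1 - y t.+1) in e0' *.
  have h1 : e ^+ 2 <= K0 / kap.
    by rewrite ler_pdivlMr // mulrC; exact: hK0.
  rewrite /Be; nra.
have hRy t : enorm (y t.+1) <= Rz + Be.
  have -> : y t.+1 = z t.+1 + - (z t.+1 - y t.+1) by rewrite opprB addrC subrK.
  apply: (le_trans (enormD _ _)); rewrite enormN.
  by apply: lerD.
have hRx t : enorm (x t) <= (Rz + Be) + gamma * (enorm (gradF 0) + L * (Rz + Be)).
  rewrite hxeq.
  apply: (le_trans (enormD _ _)); rewrite enormZ (gtr0_norm hgamma).
  apply: lerD; first exact: hRy.
  apply: ler_wpM2l; first exact: ltW.
  have -> : gradF (y t.+1) = gradF 0 + (gradF (y t.+1) - gradF 0) by rewrite addrC subrK.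
  apply: (le_trans (enormD _ _)); apply: lerD => //.
  apply: (le_trans (hFL _ _)); rewrite enormB0.
  by apply: ler_wpM2l.
split; first by exists ((Rz + Be) + gamma * (enorm (gradF 0) + L * (Rz + Be))).
have Rz0 : 0 <= Rz := le_trans (enorm_ge0 _) (hRz 0%N).
have Be0 : 0 <= Be := le_trans (enorm_ge0 _) (hBe 0%N).
split.
  exists (enorm (y 0%N) + (Rz + Be)) => -[|t].
    by rewrite lerDl addr_ge0.
  by rewrite (le_trans (hRy t)) // lerDr enorm_ge0.
exists (enorm (z 0%N) + Rz) => -[|t].
  by rewrite lerDl.
by rewrite (le_trans (hRz t)) // lerDr enorm_ge0.
Qed.
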